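(* Let $\alpha\ge2$, $k\ge2$ and $0\le t<\alpha$ be integers and $n=k\alpha+t$. Then $$\lambda_{n,\alpha}\le\begin{cases}k-1+\dfrac{2}{k-1}, & t=0,\\[2mm] k+\dfrac{2}{k}, & 1\le t<\alpha.\end{cases}$$
   Context: All graphs are finite and simple; $\lambda(G)$ is the spectral radius of the adjacency matrix of $G$. For integers $n\ge\alpha\ge1$, $\mathcal{G}_{n,\alpha}$ is the set of all connected graphs of order $n$ with independence number $\alpha$, and $\lambda_{n,\alpha}=\min\{\lambda(G):G\in\mathcal{G}_{n,\alpha}\}$. *)

(* Defs.v *)
From HB Require Import structures.
From mathcomp Require Import all_boot all_order all_algebra all_field.
Set Implicit Arguments. Unset Strict Implicit. Unset Printing Implicit Defensive.
Import Order.TTheory GRing.Theory Num.Theory.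
Local Open Scope ring_scope.

Definition simple_graph (n : nat) (e : rel 'I_n) : Prop :=
  (forall x y, e x y = e y x) /\ (forall x, ~~ e x x).

Definition connected_graph (n : nat) (e : rel 'I_n) : Prop :=
  forall x y, connect e x y.

Definition independent_set (n : nat) (e : rel 'I_n) (S : {set 'I_n}) : bool :=
  [forall x in S, forall y in S, ~~ e x y].

Definition independence_number (n : nat) (e : rel 'I_n) (a : nat) : Prop :=
  (exists S : {set 'I_n}, independent_set e S /\ #|S| = a) /\
  (forall S : {set 'I_n}, independent_set e S -> (#|S| <= a)%N).

Definition adj_matrix (n : nat) (e : rel 'I_n) : 'M[algC]_n :=
  \matrix_(i, j) (e i j)%:R.

Definition spectral_radius (n : nat) (A : 'M[algC]_n) (r : algC) : Prop :=
  (exists a, eigenvalue A a /\ `|a| = r) /\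
  (forall a, eigenvalue A a -> `|a| <= r).

Definition in_G (n alpha : nat) (e : rel 'I_n) : Prop :=
  simple_graph e /\ connected_graph e /\ independence_number e alpha.

Definition lambda_min (n alpha : nat) (r : algC) : Prop :=
  (exists e : rel 'I_n, in_G alpha e /\ spectral_radius (adj_matrix e) r) /\
  (forall (e : rel 'I_n) (s : algC), in_G alpha e ->
      spectral_radius (adj_matrix e) s -> r <= s).

(* Main.v *)
Require Import Defs.
From HB Require Import structures.
From mathcomp Require Import all_boot all_order all_algebra all_field.
From mathcomp Require Import zify ring.
From Stdlib Require Import FunctionalExtensionality Classical.
Import Order.TTheory GRing.Theory Num.Theory.
Local Open Scope ring_scope.
Set Implicit Arguments. Unset Strict Implicit.

Lemma exists_max (T : eqType) (s : seq T) (f : T -> algC) :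
  s != [::] -> (forall x, x \in s -> f x \is Num.real) ->
  exists2 y, y \in s & forall z, z \in s -> f z <= f y.
Proof.
elim: s => [//|a s IH] _ Hr.
case: (altP (s =P [::])) => [->|Hs].
  by exists a; rewrite ?mem_head // => z; rewrite inE => /eqP ->.
have Hin : forall x, x \in s -> x \in a :: s by move=> x Hx; rewrite inE Hx orbT.
have [y Hy Hmax] := IH Hs (fun x Hx => Hr x (Hin x Hx)).
have Ra := Hr a (mem_head _ _).
have Ry := Hr y (Hin y Hy).
case/orP: (real_leVge Ra Ry) => H.
  exists y; first by rewrite inE Hy orbT.
  by move=> z; rewrite inE => /orP[/eqP->//|/Hmax].
exists a; first exact: mem_head.
move=> z; rewrite inE => /orP[/eqP->//|/Hmax Hz]; exact: le_trans Hz H.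
Qed.

Lemma sr_exists n (A : 'M[algC]_n.+1) : exists r, spectral_radius A r.
Proof.
case: (closed_field_poly_normal (char_poly A)) => rs Hrs.
have Hev : forall a, eigenvalue A a = (a \in rs).
  move=> a; rewrite eigenvalue_root_char Hrs.
  have Hl : lead_coef (char_poly A) = 1 by apply/eqP; exact: char_poly_monic.
  by rewrite Hl scale1r root_prod_XsubC.
have Hne : rs != [::].
  apply/eqP => Hnil; move: (size_char_poly A); rewrite Hrs Hnil big_nil.
  by rewrite size_scale ?size_poly1 // lead_coef_eq0 -size_poly_eq0 size_char_poly.
have [y Hy Hm] := @exists_max _ rs (fun a => `|a|) Hne (fun x _ => normr_real x).
exists `|y|; split; first by exists y; rewrite Hev.
by move=> a; rewrite Hev => /Hm.
Qed.

Lemma sr_le n (A : 'M[algC]_n) r s : spectral_radius A r -> spectral_radius A s -> r <= s.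
Proof. by move=> [[a [Ha <-]] _] [_ H]; apply: H. Qed.

Lemma sr_real n (A : 'M[algC]_n) r : spectral_radius A r -> r \is Num.real.
Proof. by move=> [[a [Ha <-]] _]; apply: normr_real. Qed.

Lemma weight_bound n (A : 'M[algC]_n) (x : 'I_n -> algC) (lam a : algC) :
  (forall i j, 0 <= A i j) -> (forall i, 0 < x i) ->
  (forall j, \sum_i x i * A i j <= lam * x j) ->
  eigenvalue A a -> `|a| <= lam.
Proof.
move=> HA Hx Hcol /eigenvalueP [v Hv Hv0].
have [i0 Hi0] : exists i0, v 0 i0 != 0.
  apply/existsP; apply: contraT; rewrite negb_exists => /forallP H.
  case/eqP: Hv0; apply/matrixP => i j; rewrite ord1 mxE; apply/eqP.
  by have := H j; rewrite negbK.
have Hne : enum 'I_n != [::] by apply/eqP => H; move: (mem_enum predT i0); rewrite H.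
have [j _ Hj] := @exists_max _ (enum 'I_n) (fun i => `|v 0 i| / x i) Hne
  (fun i _ => ger0_real (divr_ge0 (normr_ge0 _) (ltW (Hx i)))).
set c := `|v 0 j| / x j in Hj.
have Hc : forall i, `|v 0 i| <= c * x i.
  by move=> i; rewrite -ler_pdivrMr //; apply: Hj; rewrite mem_enum.
have Hcpos : 0 < c.
  apply: (lt_le_trans _ (Hj i0 (mem_enum _ _))).
  by rewrite divr_gt0 // normr_gt0.
have Hvj : `|v 0 j| = c * x j by rewrite /c divfK // gt_eqF.
have Hvjpos : 0 < `|v 0 j| by rewrite Hvj mulr_gt0.
have E : a * v 0 j = \sum_i v 0 i * A i j.
  by have := congr1 (fun M : 'M[algC]_(1,n) => M 0 j) Hv; rewrite !mxE => <-.
rewrite -(ler_pM2r Hvjpos) -normrM E.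
apply: (le_trans (ler_norm_sum _ _ _)).
apply: (le_trans (y := \sum_i c * x i * A i j)).
  apply: ler_sum => i _; rewrite normrM (ger0_norm (HA i j)).
  by apply: ler_wpM2r => //; apply: Hc.
under eq_bigr do rewrite -mulrA.
rewrite -mulr_sumr Hvj mulrCA.
by apply: ler_wpM2l; [apply: ltW|apply: Hcol].
Qed.

Lemma min_exists n (P : rel 'I_n.+1 -> Prop) : (exists e, P e) ->
  exists r, (exists e, P e /\ spectral_radius (adj_matrix e) r) /\
    forall e s, P e -> spectral_radius (adj_matrix e) s -> r <= s.
Proof.
pose F (f : {ffun 'I_n.+1 * 'I_n.+1 -> bool}) : rel 'I_n.+1 := fun x y => f (x, y).
have HF : forall e : rel 'I_n.+1, e = F [ffun p => e p.1 p.2].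
  move=> e; apply: functional_extensionality => x.
  apply: functional_extensionality => y; by rewrite /F ffunE.
have claim : forall l : seq {ffun 'I_n.+1 * 'I_n.+1 -> bool},
  (exists2 f, f \in l & P (F f)) -> exists f0 r0, P (F f0) /\
    spectral_radius (adj_matrix (F f0)) r0 /\
    forall f, f \in l -> P (F f) -> forall s, spectral_radius (adj_matrix (F f)) s -> r0 <= s.
  elim=> [[f]//|g l IH] Hex.
  have [Pg|nPg] := classic (P (F g)).
    have [rg Hrg] := sr_exists (adj_matrix (F g)).
    have [Hl|nHl] := classic (exists2 f, f \in l & P (F f)).
      have [f0 [r0 [Pf0 [Hr0 Hm]]]] := IH Hl.
      case/orP: (real_leVge (sr_real Hrg) (sr_real Hr0)) => Hle.
        exists g, rg; split=> //; split=> // f; rewrite inE => /orP[/eqP->|Hf] Pf s Hs.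
          exact: sr_le Hrg Hs.
        exact: le_trans Hle (Hm f Hf Pf s Hs).
      exists f0, r0; split=> //; split=> // f; rewrite inE => /orP[/eqP->|Hf] Pf s Hs.
        exact: le_trans Hle (sr_le Hrg Hs).
      exact: Hm f Hf Pf s Hs.
    exists g, rg; split=> //; split=> // f; rewrite inE => /orP[/eqP->|Hf] Pf s Hs.
      exact: sr_le Hrg Hs.
    by case: nHl; exists f.
  have Hl : exists2 f, f \in l & P (F f).
    case: Hex => f; rewrite inE => /orP[/eqP->|Hf] Pf //; by exists f.
  have [f0 [r0 [Pf0 [Hr0 Hm]]]] := IH Hl.
  exists f0, r0; split=> //; split=> // f; rewrite inE => /orP[/eqP->|Hf] Pf s Hs //.
  exact: Hm f Hf Pf s Hs.
move=> [e Pe].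
have [f0 [r0 [Pf0 [Hr0 Hm]]]] := claim (enum {ffun 'I_n.+1 * 'I_n.+1 -> bool})
  (ex_intro2 _ _ [ffun p => e p.1 p.2] (mem_enum _ _) (eq_ind _ P Pe _ (HF e))).
exists r0; split; first by exists (F f0).
move=> e' s Pe' Hs; rewrite (HF e') in Pe' Hs.
exact: Hm _ (mem_enum _ _) Pe' s Hs.
Qed.
Unset Implicit Arguments. Set Strict Implicit.
Local Close Scope ring_scope.


Definition mate a n (u v : 'I_n) : bool := (u != v) && (u %% a == v %% a).
Definition ext a n (u v : 'I_n) : bool :=
  ((u.+1 < a) && (v == u + a.+1 :> nat)) || ((v.+1 < a) && (u == v + a.+1 :> nat)).
Arguments mate a {n} u v.
Arguments ext a {n} u v.
Definition Eg a n : rel 'I_n := fun u v => mate a u v || ext a u v.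

Lemma Eg_simple a n : simple_graph (Eg a n).
Proof.
split.
  move=> x y; rewrite /Eg /mate /ext eq_sym [x %% a == _]eq_sym; congr (_ || _).
  by rewrite orbC.
move=> x; rewrite /Eg /mate /ext eqxx /=.
by apply/negP => /orP[] /andP[_ /eqP]; lia.
Qed.

Lemma Eg_connected a n : (0 < a) -> (a + a <= n) -> connected_graph (Eg a n).
Proof.
move=> Ha Hn.
have Hn0 : 0 < n by lia.
pose o0 := Ordinal Hn0.
have H1 : forall j, j < a -> forall u : 'I_n, val u = j -> connect (Eg a n) u o0.
  elim=> [|j IH] Hj u Hu.
    by have -> : u = o0 by apply: val_inj.
  have Hw : j < n by lia.
  have Hz : j + a.+1 < n by lia.
  apply: (connect_trans (y := Ordinal Hz)).
    apply: connect1; rewrite /Eg /mate /= Hu; apply/orP; left.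
    apply/andP; split; first by apply/eqP => /(congr1 val) /=; rewrite Hu; lia.
    by rewrite addnS -addSn modnDr.
  apply: (connect_trans (y := Ordinal Hw)); last by apply: IH => //; lia.
  apply: connect1; rewrite /Eg /ext /=; apply/orP; right; apply/orP; right.
  by apply/andP; split; [lia|].
have H2 : forall x : 'I_n, connect (Eg a n) x o0.
  move=> x.
  have Hr : x %% a < n by have := ltn_pmod x Ha; lia.
  apply: (connect_trans (y := Ordinal Hr)); last by apply: H1 (ltn_pmod x Ha) _ _.
  case: (altP (x =P Ordinal Hr)) => [<-|Hne]; first exact: connect0.
  by apply: connect1; rewrite /Eg /mate Hne /= modn_mod eqxx.
move=> x y; apply: connect_trans (H2 x) _.
rewrite (sym_connect_sym (fun u v => proj1 (Eg_simple a n) u v)); exact: H2.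
Qed.

Lemma Eg_indep a n : (0 < a) -> (a <= n) -> independence_number (Eg a n) a.
Proof.
move=> Ha Hn; split.
  exists (widen_ord Hn @: [set: 'I_a]); split.
    apply/forallP => x; apply/implyP => /imsetP [i _ ->].
    apply/forallP => y; apply/implyP => /imsetP [j _ ->].
    rewrite /Eg /mate /ext /= !modn_small //.
    apply/negP => /orP[/andP[Hne /eqP Hij]|/orP[]/andP[Hl /eqP Hr]]; last 2 first.
    - have := ltn_ord i; have := ltn_ord j; lia.
    - have := ltn_ord i; have := ltn_ord j; lia.
    by case/eqP: Hne; apply: val_inj.
  rewrite card_imset ?cardsT ?card_ord //.
  by move=> i j /(congr1 val) /= Hij; apply: val_inj.
move=> S HS.
pose g (u : 'I_n) : 'I_a := Ordinal (ltn_pmod u Ha).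
have Hinj : {in S &, injective g}.
  move=> u v Hu Hv /(congr1 val) /= Huv.
  apply/eqP; apply: contraT => Hne.
  move: HS => /forallP/(_ u)/implyP/(_ Hu)/forallP/(_ v)/implyP/(_ Hv).
  by rewrite /Eg /mate Hne Huv eqxx.
rewrite -(card_in_imset Hinj).
by apply: leq_trans (max_card _) _; rewrite card_ord.
Qed.

Definition conn a (j : nat) : bool := (j.+1 < a) || ((a < j) && (j < a + a)).

Lemma conn_mod a i : conn a i -> (i == i %% a) || (i == i %% a + a).
Proof.
rewrite /conn => /orP[H|/andP[H1 H2]].
  by rewrite modn_small ?eqxx //; lia.
have Hle : a <= i by lia.
have Hm : i %% a = i - a.
  by rewrite -{1}(subnK Hle) modnDr modn_small //; lia.
rewrite Hm; apply/orP; right; apply/eqP; lia.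
Qed.

Lemma card_val_le1 n (c : nat) : #|[set i : 'I_n | i == c :> nat]| <= 1.
Proof.
apply/card_le1_eqP => x y; rewrite !inE => /eqP Hx /eqP Hy.
by apply: val_inj; rewrite /= Hx Hy.
Qed.

Lemma cm_bound a n m (j : 'I_n) : 0 < a -> n <= m * a ->
  #|[set i : 'I_n | mate a i j]| <= m.-1.
Proof.
move=> Ha Hn.
set C := [set i : 'I_n | i %% a == j %% a].
have -> : [set i : 'I_n | mate a i j] = C :\ j.
  by apply/setP => i; rewrite !inE /mate.
have Hlt : forall i : 'I_n, i %/ a < m.
  by move=> i; rewrite ltn_divLR //; have := ltn_ord i; lia.
pose g (i : 'I_n) : 'I_m := Ordinal (Hlt i).
have Hinj : {in C &, injective g}.
  move=> u v; rewrite !inE => /eqP Hu /eqP Hv /(congr1 val) /= Huv.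
  by apply: val_inj; rewrite /= (divn_eq u a) (divn_eq v a) Huv Hu Hv.
have HC : #|C| <= m.
  rewrite -(card_in_imset Hinj); apply: leq_trans (max_card _) _.
  by rewrite card_ord.
move: HC; rewrite (cardsD1 j) inE eqxx /=; lia.
Qed.

Lemma cc_bound a n (j : 'I_n) :
  #|[set i : 'I_n | mate a i j && conn a i]| + conn a j <= 2.
Proof.
set U1 := [set i : 'I_n | i == j %% a :> nat].
set U2 := [set i : 'I_n | i == j %% a + a :> nat].
set U := U1 :|: U2.
have HU : #|U| <= 2.
  rewrite cardsU; have := card_val_le1 n (j %% a); have := card_val_le1 n (j %% a + a).
  rewrite -/U1 -/U2; lia.
have Hsub : [set i : 'I_n | mate a i j && conn a i] \subset U :\ j.
  apply/subsetP => i; rewrite !inE /mate => /andP[/andP[Hne /eqP Hm] Hc].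
  rewrite Hne /=; rewrite -Hm; exact: conn_mod.
have Hj : conn a j -> j \in U.
  by move=> Hc; rewrite !inE; exact: conn_mod.
have := subset_leq_card Hsub.
move: HU; rewrite (cardsD1 j U).
case: (conn a j) Hj => [/(_ isT) ->|_] /=; lia.
Qed.

Lemma ce_bound a n (j : 'I_n) : #|[set i : 'I_n | ext a i j]| <= conn a j.
Proof.
case Hc: (conn a j).
  apply/card_le1_eqP => x y; rewrite !inE /ext => Hx Hy.
  apply: val_inj; move: Hx Hy Hc; rewrite /conn.
  case/orP=> /andP[H1 /eqP H2]; case/orP=> /andP[H3 /eqP H4] /=; lia.
rewrite leqn0 cards_eq0; apply/eqP/setP => i; rewrite !inE /ext.
apply/negP; move: Hc; rewrite /conn => Hc.
case/orP=> /andP[H1 /eqP H2]; move: Hc; lia.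
Qed.
Local Open Scope ring_scope.

Lemma sum_bool n (P : pred 'I_n) : \sum_i ((P i)%:R : algC) = #|[set i | P i]|%:R.
Proof.
rewrite -sum1_card natr_sum [RHS]big_mkcond /=; apply: eq_bigr => i _.
by rewrite inE; case: (P i).
Qed.

Definition wgt a (m i : nat) : algC :=
  if conn a i then ((m.-1)%:R + 1) / (m.-1)%:R else 1.

Lemma col_bound a n m (j : 'I_n) : (0 < a)%N -> (n <= m * a)%N -> (1 < m)%N ->
  \sum_(i < n) wgt a m i * (adj_matrix (Eg a n)) i j <=
    ((m.-1)%:R + 2 / (m.-1)%:R) * wgt a m j.
Proof.
move=> Ha Hn Hm.
set p : algC := (m.-1)%:R.
set w := (p + 1) / p.
set x := fun i : 'I_n => wgt a m i.
have Ex : forall i : 'I_n, wgt a m i = x i by [].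
rewrite Ex; under eq_bigr do rewrite Ex.
have Hxd : forall i, x i = if conn a i then w else 1 by [].
have Hp : 0 < p by rewrite /p ltr0n; case: (m) Hm => [|[]].
have Hp0 : p != 0 by rewrite gt_eqF.
have Hw1 : w - 1 = 1/p by rewrite /w; field.
have Hw1p : 0 <= w - 1 by rewrite Hw1 divr_ge0 // ltW.
have Hwp : 0 <= w by rewrite -(subrK 1 w) addr_ge0.
have Hx0 : forall i, 0 <= x i by move=> i; rewrite Hxd; case: conn; rewrite ?ler01.
have Hxw : forall i, x i <= w.
  by move=> i; rewrite Hxd; case: conn => //; rewrite -subr_ge0.
have S1 : \sum_i x i * (adj_matrix (Eg a n)) i j <=
   \sum_i ((mate a i j)%:R + (w-1) * (mate a i j && conn a i)%:R) +
   \sum_i w * (ext a i j)%:R.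
  rewrite -big_split /=; apply: ler_sum => i _.
  rewrite mxE /Eg Hxd.
  case: (mate a i j); case: (ext a i j); case: (conn a i) => /=;
    rewrite ?mulr1 ?mulr0 ?addr0 ?add0r //.
  - by rewrite [1 + _]addrC subrK lerDl.
  - by rewrite lerDl.
  - by rewrite [1 + _]addrC subrK.
  - by rewrite -subr_ge0.
apply: (le_trans S1); rewrite big_split /= -!mulr_sumr !sum_bool.
have Hcm := @cm_bound a n m j Ha Hn.
have Hcc := @cc_bound a n j.
have Hce := @ce_bound a n j.
rewrite Hxd; case Hc: (conn a j) in Hcc Hce *.
  apply: (le_trans (y := p + (w - 1) * 1%:R + w * 1%:R)).
    apply: lerD; first apply: lerD.
    - by rewrite /p ler_nat.
    - by apply: ler_wpM2l => //; rewrite ler_nat; move: Hcc => /=; rewrite addn1 ltnS.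
    - by apply: ler_wpM2l => //; rewrite ler_nat.
  rewrite -subr_ge0.
  have -> : (p + 2 / p) * w - (p + (w - 1) * 1%:R + w * 1%:R) = 2 / (p * p)
    by rewrite /w; field.
  by rewrite divr_ge0 // mulr_ge0 // ltW.
move: Hce; rewrite leqn0 => /eqP ->.
apply: (le_trans (y := p + (w - 1) * 2%:R + w * 0%:R)).
  apply: lerD; first apply: lerD.
  - by rewrite /p ler_nat.
  - by apply: ler_wpM2l => //; rewrite ler_nat; move: Hcc => /=; rewrite addn0.
  - by [].
have -> : p + (w - 1) * 2%:R + w * 0%:R = (p + 2 / p) * 1 by rewrite /w; field.
by [].
Qed.

Lemma final (N a m : nat) : (0 < a)%N -> (a + a <= N)%N -> (N <= m * a)%N -> (1 < m)%N ->
  exists r : algC, lambda_min N a r /\ r <= (m.-1)%:R + 2 / (m.-1)%:R.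
Proof.
case: N => [|N] Ha H2 Hn Hm; first by move: H2; lia.
have HG : in_G a (Eg a N.+1).
  split; first exact: Eg_simple.
  split; first exact: Eg_connected.
  apply: Eg_indep => //; lia.
have [r [[e [Pe Hre]] Hmin]] := @min_exists N (fun e => in_G a e) (ex_intro _ _ HG).
exists r; split; first by split; [exists e|].
have [rE HrE] := sr_exists (adj_matrix (Eg a N.+1)).
apply: (le_trans (Hmin _ _ HG HrE)).
case: HrE => [[a0 [Ha0 <-]] _].
apply: (weight_bound (x := wgt a m)) Ha0.
- by move=> i j; rewrite mxE ler0n.
- move=> i; rewrite /wgt; case: conn => //.
  have Hp : 0 < (m.-1)%:R :> algC by rewrite ltr0n; case: (m) Hm => [|[]].
  by rewrite divr_gt0 // addr_gt0.
- by move=> j; apply: col_bound.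
Qed.

Theorem lemma2p2 (alpha k t : nat) :
  (2 <= alpha)%N -> (2 <= k)%N -> (t < alpha)%N ->
  exists r : algC, lambda_min (k * alpha + t) alpha r /\
    (if t == 0%N then r <= (k.-1)%:R + 2 / (k.-1)%:R
     else r <= k%:R + 2 / k%:R).
Proof.
move=> Ha Hk Ht.
case: (eqVneq t 0%N) => [->|Ht0].
  have [r [H1 H2]] := @final (k * alpha + 0) alpha k ltac:(lia) ltac:(nia) ltac:(lia) ltac:(lia).
  by exists r.
have [r [H1 H2]] := @final (k * alpha + t) alpha k.+1 ltac:(lia) ltac:(nia) ltac:(nia) ltac:(lia).
exists r; split => //; case: eqP => // H0; by move: Ht0; rewrite H0.
Qed.
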